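(* Let $\kappa$ be an infinite cardinal. The lattices $B=\{(A,\,A\cap C,\,C) : A,C\in\mathcal{F}(\kappa),\ A\sim C\}$ and $E=\{(A,B,A\cap B): A,B\in\mathcal{F}(\kappa)\}$, both ordered componentwise, are not isomorphic.
   Context: $\mathcal{F}(\kappa)$ is the Boolean lattice of subsets $X\subseteq\kappa$ that are finite or cofinite. For $A,C\in\mathcal{F}(\kappa)$, $A\sim C$ means that either both $A,C$ are finite or both $\kappa\setminus A,\kappa\setminus C$ are finite. Both $B$ and $E$ are sublattices of the lattice $S$ of balanced triples $(A,B,C)\in\mathcal{F}(\kappa)^3$ (i.e. $A\cap B=A\cap C=B\cap C$) with $C\setminus((A\cap B)\cup(A\cap C)\cup(B\cap C))$ finite; $E$ is the range of the map $f(A,B,C)=(\kappa\setminus A,\kappa\setminus(B\cup C),\kappa\setminus(A\cup B\cup C))$ on $S$. *)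

(* Defs.v *)
From mathcomp Require Import all_boot.
From mathcomp Require Import boolp classical_sets cardinality.
Set Implicit Arguments. Unset Strict Implicit. Unset Printing Implicit Defensive.
Local Open Scope classical_set_scope.

Section Defs.
Variable T : Type.

(* Membership in F(kappa): finite or cofinite subsets of the carrier T. *)
Definition finF (X : set T) : Prop := finite_set X \/ finite_set (~` X).

Definition simF (A C : set T) : Prop :=
  (finite_set A /\ finite_set C) \/ (finite_set (~` A) /\ finite_set (~` C)).

Definition triple := (set T * set T * set T)%type.

Definition le3 (x y : triple) : Prop :=
  [/\ x.1.1 `<=` y.1.1, x.1.2 `<=` y.1.2 & x.2 `<=` y.2].

Definition Blat : set triple :=
  [set t | exists A C, [/\ finF A, finF C, simF A C & t = (A, A `&` C, C)]].

Definition Elat : set triple :=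
  [set t | exists A B, [/\ finF A, finF B & t = (A, B, A `&` B)]].

Definition order_iso (X Y : set triple) (f : triple -> triple) : Prop :=
  [/\ (forall x, X x -> Y (f x)),
      (forall x y, X x -> X y -> f x = f y -> x = y),
      (forall y, Y y -> exists2 x, X x & f x = y)
    & (forall x y, X x -> X y -> (le3 (f x) (f y) <-> le3 x y))].
End Defs.

(* Main.v *)
Require Import Defs.
From mathcomp Require Import all_boot.
From mathcomp Require Import boolp classical_sets cardinality.
Local Open Scope classical_set_scope.

Section Aux.
Variable T : Type.
Implicit Types X Y : set (triple T).

Definition minX X (z : triple T) := X z /\ forall w, X w -> le3 z w.
Definition atomX X (a : triple T) :=
  [/\ X a, ~ minX X a & forall z, X z -> le3 z a -> z = a \/ minX X z].
Definition At X (x : triple T) := [set a | atomX X a /\ le3 a x].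

Lemma At_image X Y f x : order_iso X Y f -> X x -> At Y (f x) = f @` At X x.
Proof.
case=> fXY finj fsurj fle Xx.
have minF z : X z -> minX X z -> minX Y (f z).
  move=> Xz [_ hz]; split; first exact: fXY.
  move=> w Yw; have [w0 Xw0 <-] := fsurj w Yw; apply/fle => //; exact: hz.
have minB z : X z -> minX Y (f z) -> minX X z.
  move=> Xz [_ hz]; split=> // w Xw; apply/(fle _ _ Xz Xw); apply: hz; exact: fXY.
apply/seteqP; split.
- move=> y [[Yy nmin hy] lyx].
  have [a Xa fa] := fsurj y Yy; subst y.
  exists a => //; split; last by apply/(fle _ _ Xa Xx).
  split=> //; first by move=> /(minF _ Xa).
  move=> z Xz lza.
  have [] := hy (f z) (fXY _ Xz) (proj2 (fle _ _ Xz Xa) lza).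
    by move=> /(finj _ _ Xz Xa) ->; left.
  by move=> /(minB _ Xz); right.
- move=> _ [a [[Xa nmin ha] lax] <-]; split; last by apply/(fle _ _ Xa Xx).
  split; first exact: fXY.
    by move=> /(minB _ Xa).
  move=> z Yz lz.
  have [z0 Xz0 fz] := fsurj z Yz; subst z.
  have [->|] := ha z0 Xz0 (proj1 (fle _ _ Xz0 Xa) lz); first by left.
  by move=> /(minF _ Xz0); right.
Qed.

Lemma At_finite X Y f x : order_iso X Y f -> X x ->
  (finite_set (At X x) <-> finite_set (At Y (f x))).
Proof.
move=> iso Xx; rewrite (At_image _ _ _ _ iso Xx).
have inj : {in At X x &, injective f}.
  case: iso => _ finj _ _ a b; rewrite !in_setE => -[[Xa _ _] _] [[Xb _ _] _].
  exact: finj.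
by rewrite (eq_finite_set (inj_card_eq inj)).
Qed.

Lemma le3_empty (z w : triple T) : z.1.1 `<=` set0 -> z.1.2 `<=` set0 ->
  z.2 `<=` set0 -> le3 z w.
Proof. by move=> h1 h2 h3; split=> s /= => [/h1|/h2|/h3]. Qed.

Lemma set1_inj (s t : T) : [set s] = [set t] -> s = t.
Proof. by move=> /(congr1 (fun P => P s)) e; have : [set s] s by []; rewrite e. Qed.


Lemma f1 (t : T) : finF [set t]. Proof. by left; exact: finite_set1. Qed.
Lemma f0 : finF (@set0 T). Proof. by left; exact: finite_set0. Qed.
Lemma fT : finF (@setT T). Proof. by right; rewrite setCT; exact: finite_set0. Qed.

Lemma Einf_u : ~ finite_set [set: T] ->
  ~ finite_set (At (@Elat T) (setT, set0, setT `&` set0)).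
Proof.
move=> Tinf fin; apply: Tinf.
pose g t : triple T := ([set t], set0, [set t] `&` set0).
have ginj : {in [set: T] &, injective g}.
  by move=> s t _ _ [] /set1_inj.
rewrite -(eq_finite_set (inj_card_eq ginj)).
apply: sub_finite_set fin => _ [t _ <-]; split; last first.
  by split=> s //= [].
split.
- by exists [set t], set0; split=> //; [exact: f1 | exact: f0].
- move=> [_ /(_ (set0, set0, set0 `&` set0))] h.
  have : le3 (g t) (set0, set0, set0 `&` set0).
    by apply: h; exists set0, set0; split=> //; exact: f0.
  by case=> /(_ t erefl).
- move=> z [P [Q [fP fQ ->]]] [/= hP hQ _].
  have [Pt|nPt] := pselect (P t).
  + left; have -> : P = [set t] by apply/seteqP; split=> // s /= ->.
    by have -> : Q = set0 by apply/seteqP; split=> [s /hQ|s []].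
  + right; split; first by exists P, Q; split.
    move=> w _; apply: le3_empty => s /=.
    * by move=> /[dup] /hP -> /nPt.
    * by move=> /hQ.
    * by move=> [_ /hQ].
Qed.

Lemma Einf_v : ~ finite_set [set: T] ->
  ~ finite_set (At (@Elat T) (set0, setT, set0 `&` setT)).
Proof.
move=> Tinf fin; apply: Tinf.
pose g t : triple T := (set0, [set t], set0 `&` [set t]).
have ginj : {in [set: T] &, injective g}.
  by move=> s t _ _ [] /set1_inj.
rewrite -(eq_finite_set (inj_card_eq ginj)).
apply: sub_finite_set fin => _ [t _ <-]; split; last first.
  by split=> s //= [].
split.
- by exists set0, [set t]; split=> //; [exact: f0 | exact: f1].
- move=> [_ /(_ (set0, set0, set0 `&` set0))] h.
  have : le3 (g t) (set0, set0, set0 `&` set0).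
    by apply: h; exists set0, set0; split=> //; exact: f0.
  by case=> _ /(_ t erefl).
- move=> z [P [Q [fP fQ ->]]] [/= hP hQ _].
  have [Qt|nQt] := pselect (Q t).
  + left; have -> : Q = [set t] by apply/seteqP; split=> // s /= ->.
    by have -> : P = set0 by apply/seteqP; split=> [s /hP|s []].
  + right; split; first by exists P, Q; split.
    move=> w _; apply: le3_empty => s /=.
    * by move=> /hP.
    * by move=> /[dup] /hQ -> /nQt.
    * by move=> [/hP].
Qed.

Lemma Bg1 (t : T) : Blat ([set t], [set t] `&` set0, set0).
Proof. exists [set t], set0; split=> //; [exact: f1|exact: f0|left; split; [exact: finite_set1|exact: finite_set0]]. Qed.
Lemma Bg2 (t : T) : Blat (set0, set0 `&` [set t], [set t]).
Proof. exists set0, [set t]; split=> //; [exact: f0|exact: f1|left; split; [exact: finite_set0|exact: finite_set1]]. Qed.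
Lemma Bbot : Blat (@set0 T, set0 `&` set0, set0).
Proof. exists set0, set0; split=> //; [exact: f0|exact: f0|left; split; exact: finite_set0]. Qed.

Lemma Bfin A C : finite_set A -> finite_set C ->
  finite_set (At (@Blat T) (A, A `&` C, C)).
Proof.
move=> fA fC.
pose g1 t : triple T := ([set t], [set t] `&` set0, set0).
pose g2 t : triple T := (set0, set0 `&` [set t], [set t]).
apply: (@sub_finite_set _ _ (g1 @` A `|` g2 @` C)); last first.
  by rewrite finite_setU; split; apply: finite_image.
move=> a [[[P [Q [fP fQ sPQ ->]]] nmin ha] [/= lP _ lQ]].
have [[t Pt]|nP] := pselect (exists t, P t).
  left; exists t; first exact: lP.
  have lg : le3 (g1 t) (P, P `&` Q, Q).
    by split=> s /=; [move-> | case=> _ [] | case].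
  case: (ha _ (Bg1 t) lg) => // -[_ /(_ _ Bbot) [/= /(_ t erefl) []]].
have [[t Qt]|nQ] := pselect (exists t, Q t).
  right; exists t; first exact: lQ.
  have lg : le3 (g2 t) (P, P `&` Q, Q).
    by split=> s /=; [case | case=> [] | move->].
  case: (ha _ (Bg2 t) lg) => // -[_ /(_ _ Bbot) [_ _ /= /(_ t erefl) []]].
exfalso; apply: nmin; split; first by exists P, Q.
move=> w _; apply: le3_empty => s /=.
- by move=> Ps; apply: nP; exists s.
- by move=> [Ps _]; apply: nP; exists s.
- by move=> Qs; apply: nQ; exists s.
Qed.

Lemma Binf A C : ~ finite_set [set: T] -> finite_set (~` A) ->
  ~ finite_set (At (@Blat T) (A, A `&` C, C)).
Proof.
move=> Tinf cA fin.
have := cofinite_set_infinite Tinf cA; apply.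
pose g t : triple T := ([set t], [set t] `&` set0, set0).
have ginj : {in A &, injective g}.
  by move=> s t _ _ [] /set1_inj.
rewrite -(eq_finite_set (inj_card_eq ginj)).
apply: sub_finite_set fin => _ [t At <-]; split; last first.
  by split=> s /=; [move-> | case=> _ [] | case].
split.
- exact: Bg1.
- move=> [_ /(_ _ Bbot)] [/= /(_ t erefl) []].
- move=> z [P [Q [fP fQ sPQ ->]]] [/= hP _ hQ].
  have [Pt|nPt] := pselect (P t).
  + left; have -> : P = [set t] by apply/seteqP; split=> // s /= ->.
    by have -> : Q = set0 by apply/seteqP; split=> [s /hQ|s []].
  + right; split; first by exists P, Q; split.
    move=> w _; apply: le3_empty => s /=.
    * by move=> /[dup] /hP -> /nPt.
    * by move=> [_ /hQ].
    * by move=> /hQ.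
Qed.

End Aux.

Theorem proposition5p9 (T : Type) (kappa_infinite : ~ finite_set [set: T]) :
  ~ exists f : triple T -> triple T, order_iso (@Blat T) (@Elat T) f.
Proof.
move=> [f iso]; have iso' := iso; case: iso' => fXY finj fsurj fle.
pose u : triple T := (setT, set0, setT `&` set0).
pose v : triple T := (set0, setT, set0 `&` setT).
have Eu : Elat u by exists setT, set0; split=> //; [exact: fT | exact: f0].
have Ev : Elat v by exists set0, setT; split=> //; [exact: f0 | exact: fT].
have [xu Bxu fxu] := fsurj u Eu.
have [xv Bxv fxv] := fsurj v Ev.
have cof x : Blat x -> ~ finite_set (@At T (@Elat T) (f x)) ->
    exists A C, [/\ finite_set (~` A), finite_set (~` C) & x = (A, A `&` C, C)].
  move=> Bx ninf; case: (Bx) => A [C [_ _ [[fA fC]|[fA fC]] ex]]; last first.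
    by exists A, C.
  by exfalso; apply: ninf; apply/(At_finite _ _ _ _ _ iso Bx); rewrite ex; exact: Bfin.
have [A [C [cA cC ex]]] := cof xu Bxu ltac:(by rewrite fxu; exact: Einf_u).
have [A' [C' [cA' cC' ey]]] := cof xv Bxv ltac:(by rewrite fxv; exact: Einf_v).
pose w : triple T := (A `&` A', (A `&` A') `&` (C `&` C'), C `&` C').
have cAA' : finite_set (~` (A `&` A')) by rewrite setCI finite_setU.
have cCC' : finite_set (~` (C `&` C')) by rewrite setCI finite_setU.
have Bw : Blat w.
  by exists (A `&` A'), (C `&` C'); split=> //; [right|right|right].
have lwu : le3 w xu.
  by rewrite ex; split=> s /=; [case | case=> -[a _] [c _] | case].
have lwv : le3 w xv.
  by rewrite ey; split=> s /=; [case | case=> -[_ a] [_ c] | case].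
have fwu : le3 (f w) u by rewrite -fxu; apply/fle.
have fwv : le3 (f w) v by rewrite -fxv; apply/fle.
apply: (@Binf T _ (C `&` C') kappa_infinite cAA').
apply/(At_finite _ _ _ _ _ iso Bw).
apply: (@sub_finite_set _ _ set0); last exact: finite_set0.
move=> a [[[P [Q [fP fQ ->]]] nmin _] [l1 l2 l3]].
exfalso; apply: nmin; split; first by exists P, Q.
case: fwu => _ u2 _; case: fwv => v1 _ _.
move=> z _; apply: le3_empty => s /=.
- by move=> /l1 /v1.
- by move=> /l2 /u2.
- by move=> [/l1 /v1].
Qed.
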